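(* Let $\mathcal{A}\subseteq\mathbb{R}^3$ be measurable with finite positive measure, $k_0>0$, $\eta>0$, $\sigma^2>0$, and for $k\in\{1,2\}$ let $\mathsf{G}_k\in L^2(\mathcal{A})$ with $\mathsf{g}_k=\int_{\mathcal{A}}|\mathsf{G}_k(\mathbf{r})|^2\mathrm{d}\mathbf{r}>0$, $\mathsf{H}_k(\mathbf{r})=\frac{\mathrm{j}k_0\eta}{\sqrt{4\pi}}\mathsf{G}_k(\mathbf{r})$, $A_{\mathsf{u},k}>0$, $\mathsf{J}_{\mathsf{ul},k}\in\mathbb{C}$, and $\overline{\gamma}_{\mathsf{ul},k}=\frac{A_{\mathsf{u},k}^2|\mathsf{J}_{\mathsf{ul},k}|^2k_0^2\eta^2}{4\pi\sigma^2}$. Let $\rho=\frac{\int_{\mathcal{A}}\mathsf{G}_1^*(\mathbf{r})\mathsf{G}_2(\mathbf{r})\mathrm{d}\mathbf{r}}{\sqrt{\mathsf{g}_1\mathsf{g}_2}}$. Let $\mu_1=-\frac{1}{\mathsf{g}_1}\pm\frac{1}{\mathsf{g}_1\sqrt{1+\overline{\gamma}_{\mathsf{ul},1}\mathsf{g}_1}}$ and $\mathsf{W}_{\mathsf{Z}}(\mathbf{r}',\mathbf{r})=\delta(\mathbf{r}'-\mathbf{r})+\mu_1\mathsf{G}_1(\mathbf{r}')\mathsf{G}_1^*(\mathbf{r})$ (the whitening transformation of the interference-plus-noise field $\mathsf{Z}(\mathbf{r})=\mathsf{H}_1(\mathbf{r})\mathsf{J}_{\mathsf{ul},1}A_{\mathsf{u},1}s_{\mathsf{ul},1}+\mathsf{N}_{\mathsf{ul}}(\mathbf{r})$),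 and let $\overline{\mathsf{H}}_2(\mathbf{r}')=\int_{\mathcal{A}}\mathsf{W}_{\mathsf{Z}}(\mathbf{r}',\mathbf{r})\mathsf{H}_2(\mathbf{r})\mathrm{d}\mathbf{r}$. Then the SNR for decoding user 2's symbol obtained by first whitening with $\mathsf{W}_{\mathsf{Z}}$ and then applying the MRC detector matched to $\overline{\mathsf{H}}_2$, namely $$\gamma_{\mathsf{ul},2}=\frac{A_{\mathsf{u},2}^2|\mathsf{J}_{\mathsf{ul},2}|^2}{\sigma^2}\int_{\mathcal{A}}|\overline{\mathsf{H}}_2(\mathbf{r}')|^2\mathrm{d}\mathbf{r}',$$ equals $$\gamma_{\mathsf{ul},2}=\overline{\gamma}_{\mathsf{ul},2}\mathsf{g}_2\left(1-\frac{\overline{\gamma}_{\mathsf{ul},1}\mathsf{g}_1|\rho|^2}{1+\overline{\gamma}_{\mathsf{ul},1}\mathsf{g}_1}\right).$$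
   Context: $\delta$ is the Dirac delta, so $\overline{\mathsf{H}}_2(\mathbf{r}')=\mathsf{H}_2(\mathbf{r}')+\mu_1\mathsf{G}_1(\mathbf{r}')\int_{\mathcal{A}}\mathsf{G}_1^*(\mathbf{r})\mathsf{H}_2(\mathbf{r})\mathrm{d}\mathbf{r}$. In the paper, $\mathcal{A}$ is the base-station continuous aperture and $\mathsf{G}_k(\mathbf{r})=\frac{e^{-\mathrm{j}k_0\|\mathbf{r}-\mathbf{s}_k\|}}{\sqrt{4\pi}\|\mathbf{r}-\mathbf{s}_k\|}\sqrt{\frac{|\mathbf{e}^{\mathsf{T}}(\mathbf{s}_k-\mathbf{r})|}{\|\mathbf{r}-\mathbf{s}_k\|}}$ for user locations $\mathbf{s}_k\notin\overline{\mathcal{A}}$ and unit normal $\mathbf{e}$ of the aperture; $\mathsf{N}_{\mathsf{ul}}$ is white Gaussian noise of intensity $\sigma^2$, $s_{\mathsf{ul},k}$ unit-power symbols. *)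

(* Defs.v *)
From HB Require Import structures.
From mathcomp Require Import all_boot all_order all_algebra.
From mathcomp Require Import all_classical all_reals all_analysis.
From mathcomp Require Import complex.
Set Implicit Arguments. Unset Strict Implicit. Unset Printing Implicit Defensive.
Import Order.TTheory GRing.Theory Num.Theory.
Local Open Scope ring_scope.
Local Open Scope classical_set_scope.

Definition R3 (R : realType) := ((R * R) * R)%type.
Definition leb3 (R : realType) :=
  ((@lebesgue_measure R \x @lebesgue_measure R) \x @lebesgue_measure R)%E.
Arguments leb3 R : clear implicits.

Definition sqmod (R : realType) (z : R[i]) : R := complex.Re z ^+ 2 + complex.Im z ^+ 2.

Definition cconj (R : realType) (z : R[i]) : R[i] := Complex (complex.Re z) (- complex.Im z).

Definition jC (R : realType) : R[i] := Complex 0 1.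

Definition rC (R : realType) (x : R) : R[i] := Complex x 0.

Definition cint (R : realType) (A : set (R3 R)) (f : R3 R -> R[i]) : R[i] :=
  Complex (Rintegral (leb3 R) A (fun r => complex.Re (f r)))
          (Rintegral (leb3 R) A (fun r => complex.Im (f r))).

Definition cL2 (R : realType) (A : set (R3 R)) (f : R3 R -> R[i]) : Prop :=
  measurable_fun A (fun r => complex.Re (f r)) /\ measurable_fun A (fun r => complex.Im (f r)) /\
  (\int[leb3 R]_(r in A) (sqmod (f r))%:E < +oo)%E.

(* Main.v *)
Require Import Defs.
From HB Require Import structures.
From mathcomp Require Import all_boot all_order all_algebra.
From mathcomp Require Import all_classical all_reals all_analysis.
From mathcomp Require Import measurable_realfun.
From mathcomp Require Import complex.
From mathcomp Require Import ring lra.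
Import Order.TTheory GRing.Theory Num.Theory.
Local Open Scope ring_scope.
Local Open Scope classical_set_scope.

Section helpers.
Context {d} {T : measurableType d} {R : realType} {mu : {measure set T -> \bar R}}.

Lemma intD' {D : set T} {f g : T -> R} : measurable D ->
  mu.-integrable D (EFin \o f) -> mu.-integrable D (EFin \o g) ->
  mu.-integrable D (EFin \o (fun x => f x + g x)).
Proof.
move=> mD hf hg; apply: (eq_integrable mD ((EFin \o f) \+ (EFin \o g))%E); last exact: integrableD.
by move=> x _; rewrite /= EFinD.
Qed.

Lemma intZ' {D : set T} {f : T -> R} {k} : measurable D ->
  mu.-integrable D (EFin \o f) ->
  mu.-integrable D (EFin \o (fun x => k * f x)).
Proof.
move=> mD hf; apply: (eq_integrable mD (fun x => k%:E * (EFin \o f) x)%E); last exact: integrableZl.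
by move=> x _; rewrite /= EFinM.
Qed.

Lemma getm {D : set T} {f : T -> \bar R} :
  mu.-integrable D f -> measurable D -> measurable D.
Proof. by []. Qed.

End helpers.

Theorem theorem1 (R : realType) (A : set (R3 R))
  (k0 eta sigma2 : R) (G1 G2 : R3 R -> R[i])
  (Au1 Au2 : R) (J1 J2 : R[i]) (pm : bool) :
  measurable A ->
  (0 < leb3 R A)%E -> (leb3 R A < +oo)%E ->
  0 < k0 -> 0 < eta -> 0 < sigma2 ->
  cL2 A G1 -> cL2 A G2 ->
  let g1 := Rintegral (leb3 R) A (fun r => sqmod (G1 r)) in
  let g2 := Rintegral (leb3 R) A (fun r => sqmod (G2 r)) in
  0 < g1 -> 0 < g2 ->
  0 < Au1 -> 0 < Au2 ->
  let H2 := fun r => jC R * rC (k0 * eta / Num.sqrt (4 * pi)) * G2 r in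
  let gbar1 := Au1 ^+ 2 * sqmod J1 * k0 ^+ 2 * eta ^+ 2 / (4 * pi * sigma2) in
  let gbar2 := Au2 ^+ 2 * sqmod J2 * k0 ^+ 2 * eta ^+ 2 / (4 * pi * sigma2) in
  let rho := rC (Num.sqrt (g1 * g2))^-1 * cint A (fun r => cconj (G1 r) * G2 r) in
  let mu1 := - g1^-1 + (if pm then 1 else -1) / (g1 * Num.sqrt (1 + gbar1 * g1)) in
  let H2bar := fun r' =>
    H2 r' + rC mu1 * G1 r' * cint A (fun r => cconj (G1 r) * H2 r) in
  let gamma2 := Au2 ^+ 2 * sqmod J2 / sigma2 *
                Rintegral (leb3 R) A (fun r' => sqmod (H2bar r')) in
  gamma2 = gbar2 * g2 * (1 - gbar1 * g1 * sqmod rho / (1 + gbar1 * g1)).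
Proof.
move=> mA _ _ k0p etap s2p [mx1 [my1 i1]] [mx2 [my2 i2]] g1 g2 g1p g2p _ _
  H2 gb1 gb2 rho mu1 H2bar gamma2.
set c := k0 * eta / Num.sqrt (4 * pi).
pose f1 r := sqmod (G1 r).
pose f2 r := sqmod (G2 r).
pose p r := complex.Re (G1 r) * complex.Re (G2 r) + complex.Im (G1 r) * complex.Im (G2 r).
pose q r := complex.Re (G1 r) * complex.Im (G2 r) - complex.Im (G1 r) * complex.Re (G2 r).
have sq0 : forall z : R[i], 0 <= sqmod z.
  by move=> z; rewrite /sqmod addr_ge0 // sqr_ge0.
have mf1 : measurable_fun A f1.
  by apply: measurable_realfun.measurable_funD; apply: measurable_realfun.measurable_funX.
have mf2 : measurable_fun A f2.
  by apply: measurable_realfun.measurable_funD; apply: measurable_realfun.measurable_funX.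
have if1 : (leb3 R).-integrable A (EFin \o f1).
  apply/integrableP; split; first exact/measurable_EFinP.
  by under eq_integral => r _ do rewrite /= ger0_norm ?sq0 //.
have if2 : (leb3 R).-integrable A (EFin \o f2).
  apply/integrableP; split; first exact/measurable_EFinP.
  by under eq_integral => r _ do rewrite /= ger0_norm ?sq0 //.
have {}mA := getm if1 mA.
have if12 := intD' mA if1 if2.
have ip : (leb3 R).-integrable A (EFin \o p).
  apply: (le_integrable mA _ _ if12).
    apply/measurable_EFinP; apply: measurable_realfun.measurable_funD; apply: measurable_realfun.measurable_funM => //.
  move=> r _ /=; rewrite lee_fin [X in _ <= X]ger0_norm; last exact: addr_ge0 (sq0 _) (sq0 _).
  rewrite /p /f1 /f2 /sqmod.
  set x1 := complex.Re (G1 r); set y1 := complex.Im (G1 r).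
  set x2 := complex.Re (G2 r); set y2 := complex.Im (G2 r).
  have h1 : 0 <= (x1 + x2) ^+ 2 by exact: sqr_ge0.
  have h2 : 0 <= (x1 - x2) ^+ 2 by exact: sqr_ge0.
  have h3 : 0 <= (y1 + y2) ^+ 2 by exact: sqr_ge0.
  have h4 : 0 <= (y1 - y2) ^+ 2 by exact: sqr_ge0.
  rewrite ler_norml; apply/andP; split; nra.
have iq : (leb3 R).-integrable A (EFin \o q).
  apply: (le_integrable mA _ _ if12).
    apply/measurable_EFinP; apply: measurable_realfun.measurable_funB; apply: measurable_realfun.measurable_funM => //.
  move=> r _ /=; rewrite lee_fin [X in _ <= X]ger0_norm; last exact: addr_ge0 (sq0 _) (sq0 _).
  rewrite /q /f1 /f2 /sqmod.
  set x1 := complex.Re (G1 r); set y1 := complex.Im (G1 r).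
  set x2 := complex.Re (G2 r); set y2 := complex.Im (G2 r).
  have h1 : 0 <= (x1 + y2) ^+ 2 by exact: sqr_ge0.
  have h2 : 0 <= (x1 - y2) ^+ 2 by exact: sqr_ge0.
  have h3 : 0 <= (y1 + x2) ^+ 2 by exact: sqr_ge0.
  have h4 : 0 <= (y1 - x2) ^+ 2 by exact: sqr_ge0.
  rewrite ler_norml; apply/andP; split; nra.
set a := Rintegral (leb3 R) A p.
set b := Rintegral (leb3 R) A q.
have eI : cint A (fun r => cconj (G1 r) * G2 r) = Complex a b.
  rewrite /cint; congr Complex; apply: eq_Rintegral => r _;
  rewrite /p /q; case: (G1 r) => x1 y1; case: (G2 r) => x2 y2 /=; ring.
have eJ : cint A (fun r => cconj (G1 r) * H2 r) = Complex (- (c * b)) (c * a).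
  rewrite /cint; congr Complex.
    transitivity (Rintegral (leb3 R) A (fun r => (- c) * q r)); last by rewrite RintegralZl // mulNr.
    apply: eq_Rintegral => r _; rewrite /H2 /q -/c; case: (G1 r) => x1 y1; case: (G2 r) => x2 y2 /=; ring.
  transitivity (Rintegral (leb3 R) A (fun r => c * p r)); last by rewrite RintegralZl.
  apply: eq_Rintegral => r _; rewrite /H2 /p -/c; case: (G1 r) => x1 y1; case: (G2 r) => x2 y2 /=; ring.
have eS : Rintegral (leb3 R) A (fun r' => sqmod (H2bar r')) =
   c ^+ 2 * g2 + (c ^+ 2 * mu1 ^+ 2 * (a ^+ 2 + b ^+ 2)) * g1
   + (2 * mu1 * c ^+ 2 * a) * a + (2 * mu1 * c ^+ 2 * b) * b.
  transitivity (Rintegral (leb3 R) A (fun r => c ^+ 2 * f2 r + (c ^+ 2 * mu1 ^+ 2 * (a ^+ 2 + b ^+ 2)) * f1 r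
     + (2 * mu1 * c ^+ 2 * a) * p r + (2 * mu1 * c ^+ 2 * b) * q r)); last first.
    have j1 := intZ' (k := c ^+ 2) mA if2.
    have j2 := intZ' (k := c ^+ 2 * mu1 ^+ 2 * (a ^+ 2 + b ^+ 2)) mA if1.
    have j3 := intZ' (k := 2 * mu1 * c ^+ 2 * a) mA ip.
    have j4 := intZ' (k := 2 * mu1 * c ^+ 2 * b) mA iq.
    rewrite (RintegralD mA (intD' mA (intD' mA j1 j2) j3) j4).
    rewrite (RintegralD mA (intD' mA j1 j2) j3) (RintegralD mA j1 j2).
    by rewrite !RintegralZl.
  apply: eq_Rintegral => r _; rewrite /H2bar eJ /H2 -/c /f1 /f2 /p /q.
  case: (G1 r) => x1 y1; case: (G2 r) => x2 y2; rewrite /sqmod /jC /rC /=; ring.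
have g1n : g1 != 0 by rewrite gt_eqF.
have g2n : g2 != 0 by rewrite gt_eqF.
have pip := pi_gt0 R.
have gb1ge : 0 <= gb1.
  apply: divr_ge0; last by rewrite ltW // !mulr_gt0.
  exact: mulr_ge0 (mulr_ge0 (mulr_ge0 (sqr_ge0 _) (sq0 _)) (sqr_ge0 _)) (sqr_ge0 _).
have erho : sqmod rho = (a ^+ 2 + b ^+ 2) / (g1 * g2).
  rewrite /rho eI /sqmod /rC /=.
  have ht : Num.sqrt (g1 * g2) ^+ 2 = g1 * g2 by rewrite sqr_sqrtr // mulr_ge0 // ltW.
  rewrite !mul0r subr0 addr0 !exprMn exprVn ht.
  by rewrite -mulrDr mulrC.
have ec : c ^+ 2 = k0 ^+ 2 * eta ^+ 2 / (4 * pi).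
  rewrite /c expr_div_n exprMn sqr_sqrtr //.
  by rewrite ltW // mulr_gt0.
have key : mu1 ^+ 2 * g1 + 2 * mu1 = - gb1 / (1 + gb1 * g1).
  have hpos : 0 <= 1 + gb1 * g1 by rewrite addr_ge0 // mulr_ge0 // ltW.
  rewrite /mu1.
  set s := Num.sqrt (1 + gb1 * g1).
  have hs : s ^+ 2 = 1 + gb1 * g1 by rewrite sqr_sqrtr.
  have hp1 : 0 < 1 + gb1 * g1 by have := mulr_ge0 gb1ge (ltW g1p); lra.
  have sp : 0 < s by rewrite sqrtr_gt0.
  have sn : s != 0 by rewrite gt_eqF.
  have gbE : gb1 = (s ^+ 2 - 1) / g1 by rewrite hs; field; rewrite g1n.
  rewrite -hs gbE.
  by case: ifP => _; field; rewrite sn g1n.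
rewrite /gamma2 eS.
have -> : c ^+ 2 * g2 + c ^+ 2 * mu1 ^+ 2 * (a ^+ 2 + b ^+ 2) * g1 +
    2 * mu1 * c ^+ 2 * a * a + 2 * mu1 * c ^+ 2 * b * b =
    c ^+ 2 * (g2 + (mu1 ^+ 2 * g1 + 2 * mu1) * (a ^+ 2 + b ^+ 2)) by ring.
rewrite key ec erho /gb2.
have h1n : 1 + gb1 * g1 != 0.
  by rewrite gt_eqF //; have := mulr_ge0 gb1ge (ltW g1p); lra.
have pin : pi != 0 :> R by rewrite gt_eqF.
have s2n : sigma2 != 0 by rewrite gt_eqF.
move: pin; generalize (pi : R) => P Pn.
by field; rewrite h1n g2n g1n s2n Pn.
Qed.
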